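(* For any $t\in \mathbb{T}_n$, denote the value of the $(1,n)$ entry of its matrix format $\hat{t}$ as $\hat{t}_{1,n}$, and let $J_n$ be the $(n\times n)$ exchange matrix (entries $1$ on the antidiagonal, $0$ elsewhere). Then $\frac{1}{\hat{t}_{1,n}}\hat{t}\, J_n$ is a normalized uncurling metric of $\mathbb{T}_n$ if $\hat{t}_{1,n}\ne 0$, and all normalized uncurling metrics of $\mathbb{T}_n$ can be written in this form for some $t\in \mathbb{T}_n$.
   Context: $\mathbb{T}_n$ is the $n$-dimensional real unital algebra (usual matrix product) of real upper triangular Toeplitz $(n\times n)$-matrices, with elements $s=(x_1,\dots,x_n)$ giving the constant values on the successive diagonals starting from the main diagonal; its identity is $\mathbf{1}=(1,0,\dots,0)$, so $\|\mathbf{1}\|^2=\mathbf{1}\cdot\mathbf{1}=1$. An uncurling metric is a real symmetric $(n\times n)$-matrix $L$ satisfying $d\big((s^{-1})^T L\,\mathbf{d}s\big)=0$ on an open ball of units centered at $\mathbf{1}$ (with $\mathbf{d}s=(dx_1,\dots,dx_n)^T$ and $d$ the exterior derivative). A normalized uncurling metric is an uncurling metric $L$ that additionally satisfies $s^T L s^{-1}=\|\mathbf{1}\|^2$ on a sufficiently small neighborhood of $\mathbf{1}$. It is known that every uncurling metric of $\mathbb{T}_n$ has the form $\hat t J_n$ for some $t\in\mathbb{T}_n$. *)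

(* Defs.v *)
From HB Require Import structures.
From mathcomp Require Import all_boot all_order all_algebra.
From mathcomp Require Import all_classical all_reals topology normedtype derive.
Set Implicit Arguments. Unset Strict Implicit. Unset Printing Implicit Defensive.
Import Order.TTheory GRing.Theory Num.Theory.
Import numFieldNormedType.Exports.
Local Open Scope ring_scope.

Section Toeplitz.
Variables (R : realType) (n : nat).
(* Elements s = (x_1,...,x_{n+1}) of T_{n+1}, as column vectors (0-indexed). *)
Notation V := 'cV[R]_n.+1.

(* matrix format \hat s : entry (i,j) is x_{j-i+1} if j >= i, 0 otherwise *)
Definition hat (s : V) : 'M[R]_n.+1 :=
  \matrix_(i, j) \sum_(k < n.+1 | (i + k == j)%N) s k 0.

Definition tone : V := delta_mx 0 0.

Definition tunit (s : V) : bool := hat s \in unitmx.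

Definition tinv (s : V) : V := (row 0 (invmx (hat s)))^T.

Definition exchange : 'M[R]_n.+1 := \matrix_(i, j) ((i + j == n)%N)%:R.

(* coefficient of dx_j in the 1-form (s^{-1})^T L ds *)
Definition form_coef (L : 'M[R]_n.+1) (j : 'I_n.+1) (s : V) : R :=
  ((tinv s)^T *m L) 0 j.

(* d((s^{-1})^T L ds) = 0 at s : the exterior derivative of the 1-form
   sum_j a_j dx_j vanishes iff  d a_j / d x_k = d a_k / d x_j  for all j,k *)
Definition closed_at (L : 'M[R]_n.+1) (s : V) : Prop :=
  forall j k : 'I_n.+1,
    'D_(delta_mx k 0) (form_coef L j) s = 'D_(delta_mx j 0) (form_coef L k) s.

Definition uncurling (L : 'M[R]_n.+1) : Prop :=
  L^T = L /\
  exists r : R, 0 < r /\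
    (forall s : V, ball tone r s -> tunit s) /\
    (forall s : V, ball tone r s -> closed_at L s).

Definition normalized_uncurling (L : 'M[R]_n.+1) : Prop :=
  uncurling L /\
  \forall s \near tone, (s^T *m L *m tinv s) 0 0 = (tone^T *m tone) 0 0.

End Toeplitz.

(* Main.v *)
Require Import Defs.
From HB Require Import structures.
From mathcomp Require Import all_boot all_order all_algebra.
From mathcomp Require Import all_classical all_reals topology normedtype derive.
From mathcomp Require Import zify lra.
Import Order.TTheory GRing.Theory Num.Theory.
Import numFieldNormedType.Exports.
Local Open Scope classical_set_scope.
Local Open Scope ring_scope.
Section T.
Variables (R : realType) (n : nat).
Local Notation V := 'cV[R]_n.+1.
Local Notation M := 'M[R]_n.+1.

Lemma ballE (x y : V) r : ball x r y -> forall i j, `|x i j - y i j| < r.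
Proof. move=> [_ H] i j. by move: (H i j); rewrite /ball /=. Qed.
Lemma ballI (x y : V) r : 0 < r -> (forall i j, `|x i j - y i j| < r) -> ball x r y.
Proof. move=> r0 H. split => // i j; rewrite /ball /=; exact: H. Qed.

Lemma hatij (a : V) (i j : 'I_n.+1) :
  hat a i j = if (i <= j)%N then a (inord (j - i)) 0 else 0.
Proof.
rewrite /hat mxE; case: leqP => hij.
  rewrite (big_pred1 (inord (j - i))) // => k /=.
  have hk := ltn_ord k; have hj := ltn_ord j.
  apply/eqP/eqP => [<-|->]; first by apply/val_inj; rewrite /= inordK; lia.
  by rewrite /= inordK; lia.
by rewrite big_pred0 // => k; apply/eqP; lia.
Qed.

Definition Nm : M := \matrix_(i, j) ((i.+1 == j)%N)%:R.

Lemma sum_eqn (c : nat) (F : 'I_n.+1 -> R) :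
  \sum_(m < n.+1) ((c == m)%N)%:R * F m = if (c < n.+1)%N then F (inord c) else 0.
Proof.
case: ltnP => hc.
  rewrite (bigD1 (inord c)) //= inordK // eqxx mul1r big1 ?addr0 // => m hm.
  case: eqP => [e|]; last by rewrite mul0r.
  by move: hm; rewrite (_ : m = inord c) ?eqxx //; apply/val_inj; rewrite /= inordK.
rewrite big1 // => m _; case: eqP => [e|]; last by rewrite mul0r.
have := ltn_ord m; lia.
Qed.

Lemma NmX k : Nm ^+ k = \matrix_(i,j) ((i + k == j)%N)%:R.
Proof.
elim: k => [|k IH].
  by apply/matrixP => i j; rewrite expr0 !mxE addn0.
rewrite exprSr IH -mulmxE; apply/matrixP => i j; rewrite !mxE.
under eq_bigr do rewrite !mxE.
rewrite sum_eqn; case: ltnP => h.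
  by rewrite inordK // addnS.
by case: eqP => //; have := ltn_ord j; lia.
Qed.

Lemma hatE (a : V) : hat a = \sum_(k < n.+1) a k 0 *: Nm ^+ k.
Proof.
apply/matrixP => i j; rewrite /hat !mxE summxE big_mkcond /=.
by apply: eq_bigr => k _; rewrite NmX !mxE; case: ifP; rewrite ?mulr1 ?mulr0.
Qed.

Lemma comm_hat (a b : V) : hat a *m hat b = hat b *m hat a.
Proof.
have cZ (x y : M) c : GRing.comm x y -> GRing.comm x (c *: y).
  by rewrite /GRing.comm => e; rewrite -scalerAl -scalerAr e.
rewrite !hatE mulmxE; apply: commr_sum => l _.
apply: (cZ); apply: commr_sym; apply: commr_sum => k _; apply: (cZ).
by rewrite /GRing.comm -!exprD addnC.
Qed.

Definition J := exchange R n.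

Lemma JT : J^T = J.
Proof. by apply/matrixP => i j; rewrite !mxE addnC. Qed.

Lemma NJ : Nm *m J = J *m Nm^T.
Proof.
apply/matrixP => i j; rewrite !mxE.
under eq_bigr do rewrite !mxE.
under [X in _ = X]eq_bigr do rewrite !mxE mulrC.
rewrite !sum_eqn; case: ltnP => h1; case: ltnP => h2; rewrite ?inordK //.
- by congr (_%:R); apply/eqP/eqP; lia.
- by case: eqP => //; lia.
- by case: eqP => //; lia.
Qed.

Lemma NXJ k : Nm ^+ k *m J = J *m (Nm ^+ k)^T.
Proof.
elim: k => [|k IH]; first by rewrite expr0 mul1mx trmx1 mulmx1.
rewrite exprS -mulmxE -mulmxA IH mulmxA NJ -mulmxA -trmx_mul mulmxE -exprSr.
by rewrite exprS.
Qed.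

Lemma hatJ (a : V) : hat a *m J = J *m (hat a)^T.
Proof.
rewrite hatE mulmx_suml linear_sum mulmx_sumr; apply: eq_bigr => k _.
by rewrite -scalemxAl NXJ linearZ /= -scalemxAr.
Qed.

Lemma hat_lin (h : R) (v s : V) : hat (h *: v + s) = h *: hat v + hat s.
Proof.
apply/matrixP => i j; rewrite !mxE.
under eq_bigr do rewrite !mxE.
by rewrite big_split /= mulr_sumr.
Qed.

Definition tone' : V := tone R n.

Lemma hat_tone : hat tone' = 1.
Proof.
apply/matrixP => i j; rewrite hatij !mxE; case: leqP => h.
  congr ((nat_of_bool _)%:R); rewrite eqxx andbT; have hj := ltn_ord j.
  apply/idP/idP => /eqP e; apply/eqP.
    move: e => /(congr1 val); rewrite /= inordK; last by lia.
    by move=> e; apply/val_inj => /=; lia.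
  by rewrite e subnn; apply/val_inj; rewrite /= inordK.
by case: eqP => // e; move: h; rewrite e ltnn.
Qed.

Lemma hat_row0 (a : V) m : hat a 0 m = a m 0.
Proof. by rewrite hatij leq0n subn0 inord_val. Qed.

Lemma hat_unit (s : V) : s 0 0 != 0 -> hat s \in unitmx.
Proof.
move=> s0; rewrite unitmxE -det_tr det_trig.
  rewrite (eq_bigr (fun _ => s 0 0)); last first.
    by move=> i _; rewrite mxE hatij leqnn subnn (_ : inord 0 = 0) //; apply/val_inj; rewrite /= inordK.
  by rewrite prodr_const unitfE expf_neq0.
apply/is_trig_mxP => i j hij; rewrite mxE hatij; case: leqP => //; lia.
Qed.


Lemma form_coefE (L : M) j (s : V) : form_coef L j s = (invmx (hat s) *m L) 0 j.
Proof. by rewrite /form_coef /tinv trmxK -row_mul mxE. Qed.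

Lemma comm_inv (X Y : M) : X \in unitmx -> X *m Y = Y *m X ->
  invmx X *m Y = Y *m invmx X.
Proof.
move=> uX e.
by rewrite -[LHS]mulmx1 -(mulmxV uX) !mulmxA -[invmx X *m Y *m X]mulmxA -e
  mulmxA mulVmx // mul1mx.
Qed.

Lemma D_form (L : M) (j k : 'I_n.+1) (s : V) : hat s \in unitmx ->
  'D_(delta_mx k 0) (form_coef L j) s = - (invmx (hat s) *m invmx (hat s) *m L) k j.
Proof.
move=> us.
set A := hat s; set B := hat (delta_mx k 0 : V); set U := invmx A.
pose P : 'M[{poly R}]_n.+1 := \matrix_(a, b) ((A a b)%:P + 'X * (B a b)%:P).
have Peval h : map_mx (horner_eval h) P = h *: B + A.
  by apply/matrixP => a b; rewrite !mxE /= horner_evalE !hornerE addrC mulrC.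
pose p := \det P.
have pE h : p.[h] = \det (h *: B + A) by rewrite -Peval det_map_mx.
pose C := B *m U *m L.
pose r := \sum_m (\adj P 0 m) * (C m j)%:P.
have key h : p.[h] != 0 -> (invmx (h *: B + A) *m C) 0 j = p.[h]^-1 * r.[h].
  move=> ph; have u : (h *: B + A) \in unitmx by rewrite unitmxE unitfE -pE.
  rewrite /invmx u -pE -scalemxAl mxE; congr (_ * _).
  rewrite mxE horner_sum; apply: eq_bigr => m _.
  rewrite hornerM hornerC.
  by rewrite -Peval -map_mx_adj mxE.
pose G h := - (p.[h]^-1 * r.[h]).
have p0 : p.[0] != 0 by rewrite pE scale0r add0r -unitfE -unitmxE.
have quot h : h != 0 -> p.[h] != 0 ->
    h^-1 *: (form_coef L j (h *: delta_mx k 0 + s) - form_coef L j s) = G h.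
  move=> h0 ph; have u : (h *: B + A) \in unitmx by rewrite unitmxE unitfE -pE.
  rewrite !form_coefE hat_lin -/A -/B -/U.
  set W := invmx (h *: B + A).
  have WU : W - U = - h *: (W *m B *m U).
    have e1 : W = W *m A *m U by rewrite -mulmxA mulmxV // mulmx1.
    have e2 : U = W *m (h *: B + A) *m U by rewrite mulVmx // mul1mx.
    rewrite {1}e1 {2}e2 -mulmxBl -mulmxBr.
    have -> : A - (h *: B + A) = - h *: B by rewrite opprD addrCA subrr addr0 scaleNr.
    by rewrite -scalemxAr -scalemxAl.
  have -> : (W *m L) 0 j - (U *m L) 0 j = ((W - U) *m L) 0 j.
    by rewrite mulmxBl !mxE.
  rewrite WU -scalemxAl mxE /G -(key _ ph) /C !mulmxA.
  have sE (x y : R) : x *: y = x * y by [].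
  by rewrite -/W sE mulNr mulrN mulrA mulVf // mul1r.
rewrite /derive; apply: cvg_lim; first exact: norm_hausdorff.
eapply cvg_trans; first apply: (@near_eq_cvg _ _ _ _ G).
  near=> h; rewrite /= quot //.
  - by near: h; exact: nbhs_dnbhs_neq.
  - near: h; apply: (@cvgr_neq0 _ _ _ _ _ (horner p) p.[0]) => //.
    by apply: cvg_within_filter; apply: continuous_horner.
have -> : - (U *m U *m L) k j = G 0.
  rewrite /G -key // scale0r add0r -/U /C; congr (- _).
  rewrite !mulmxA (@comm_inv A B us (comm_hat _ _)) -!mulmxA [RHS]mxE.
  rewrite (bigD1 k) //= big1 ?addr0.
    by rewrite /B hat_row0 !mxE !eqxx mul1r.
  move=> m hm; rewrite /B hat_row0 mxE (negbTE hm) /= mul0r //.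
apply: cvg_within_filter.
apply: cvgN; apply: cvgM; last by apply: continuous_horner.
by apply: cvgV => //; apply: continuous_horner.
Unshelve. all: by end_near.
Qed.


Lemma closedP (L : M) (s : V) : hat s \in unitmx -> closed_at L s ->
  (invmx (hat s) *m invmx (hat s) *m L)^T = invmx (hat s) *m invmx (hat s) *m L.
Proof.
move=> us cl; apply/matrixP => i j; rewrite mxE.
by have := cl j i; rewrite !D_form // => /oppr_inj ->.
Qed.

Lemma closedI (L : M) (s : V) : hat s \in unitmx ->
  (invmx (hat s) *m invmx (hat s) *m L)^T = invmx (hat s) *m invmx (hat s) *m L ->
  closed_at L s.
Proof.
move=> us e j k; rewrite !D_form //; congr (- _).
by rewrite -[in RHS]e [RHS]mxE.
Qed.

Lemma tinv_tone : tinv tone' = tone'.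
Proof.
rewrite /tinv hat_tone invmx1; apply/matrixP => i j.
by rewrite !mxE (ord1 j) eqxx andbT eq_sym.
Qed.

Definition e1 : V := \col_(i < n.+1) ((nat_of_ord i == 1)%N)%:R.

Lemma hat_e1 : hat e1 = Nm.
Proof.
apply/matrixP => i j; rewrite hatij !mxE.
case: leqP => h; have hj := ltn_ord j; last by case: eqP => //; lia.
rewrite inordK; last by lia.
by congr ((nat_of_bool _)%:R); apply/eqP/eqP; lia.
Qed.

Lemma sym_cond (L : M) (s : V) : L^T = L -> hat s \in unitmx -> closed_at L s ->
  (hat s ^+ 2) *m L = L *m (hat s ^+ 2)^T.
Proof.
move=> LT us cl; have E := @closedP L s us cl.
set A := hat s; set U := invmx A.
rewrite trmx_mul LT in E.
have AU : A ^+ 2 *m (U *m U) = 1%:M.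
  by rewrite expr2 -mulmxE mulmxA -(mulmxA A A U) mulmxV // mulmx1 mulmxV.
rewrite -[LHS]mulmx1 -trmx1 -AU trmx_mul mulmxA -(mulmxA _ L) E.
by rewrite !mulmxA -(mulmxA _ U U) AU mul1mx.
Qed.

Lemma dir2_NL (L : M) r : L^T = L -> 0 < r ->
  (forall s, ball tone' r s -> hat s \in unitmx /\ closed_at L s) ->
  Nm *m L = L *m Nm^T.
Proof.
move=> LT r0 H.
pose D (X : M) := X *m L - L *m X^T.
have DB X Y : D (X - Y) = D X - D Y.
  rewrite /D mulmxBl linearB /= mulmxBr.
  by rewrite !opprB addrACA [RHS]addrACA [- _ + _]addrC.
have D0 h : `|h| < r -> D ((h *: Nm + 1) ^+ 2) = 0.
  move=> hr; pose s := h *: e1 + tone'.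
  have hs : hat s = h *: Nm + 1 by rewrite hat_lin hat_e1 hat_tone.
  have [us cl] : hat s \in unitmx /\ closed_at L s.
    apply: H; apply: ballI => // i j; rewrite !mxE.
    rewrite opprD addrCA subrr addr0 normrN normrM.
    case: (nat_of_ord i == 1)%N; rewrite ?normr1 ?mulr1 ?normr0 ?mulr0 //.
  by rewrite /D -hs; apply/eqP; rewrite subr_eq0; apply/eqP; apply: sym_cond.
pose h := r / 2.
have hr : `|h| < r by rewrite /h ger0_norm; lra.
have hr' : `|- h| < r by rewrite normrN.
have := D0 _ hr; have := D0 _ hr'.
rewrite scaleNr (addrC (- _)) -opprB sqrrN sqrrB1 sqrrD1 => e2 e3.
have : D ((h *: Nm) *+ 4) = 0.
  have -> : (h *: Nm) *+ 4 = ((h *: Nm) ^+ 2 + (h *: Nm) *+ 2 + 1) - ((h *: Nm) ^+ 2 - (h *: Nm) *+ 2 + 1).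
    rewrite opprD addrACA subrr addr0 opprB [_ ^+ 2 + _]addrC addrACA subrr addr0.
    by rewrite -mulrnDr.
  by rewrite DB e2 e3 subrr.
rewrite /D -scaler_nat scalerA -scalemxAl linearZ /= -scalemxAr -scalerBr.
move/eqP; rewrite scaler_eq0 => /orP [|]; last by rewrite subr_eq0 => /eqP.
rewrite mulf_eq0 pnatr_eq0 /= => /eqP; rewrite /h => e; exfalso; move: e; apply/eqP.
by rewrite mulf_neq0 ?(lt0r_neq0 r0) // invr_eq0 pnatr_eq0.
Qed.


Lemma NL_entry (L : M) (i j : 'I_n.+1) :
  (Nm *m L) i j = if (i.+1 < n.+1)%N then L (inord i.+1) j else 0.
Proof. rewrite mxE; under eq_bigr do rewrite mxE; exact: sum_eqn. Qed.

Lemma LNT_entry (L : M) (i j : 'I_n.+1) :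
  (L *m Nm^T) i j = if (j.+1 < n.+1)%N then L i (inord j.+1) else 0.
Proof. rewrite mxE; under eq_bigr do rewrite !mxE mulrC; exact: sum_eqn. Qed.

Lemma hankel (L : M) : Nm *m L = L *m Nm^T -> forall i j : 'I_n.+1,
  L i j = if (i + j <= n)%N then L (inord (i + j)) 0 else 0.
Proof.
move=> E.
suff H : forall j, (j < n.+1)%N -> forall i : 'I_n.+1,
    L i (inord j) = if (i + j <= n)%N then L (inord (i + j)) 0 else 0.
  by move=> i j; rewrite -(H j (ltn_ord j) i) inord_val.
elim=> [|j IH] hj i.
  have hi := ltn_ord i; rewrite addn0 (_ : (i <= n)%N) ?inord_val //.
  by congr (L _ _); apply/val_inj; rewrite /= inordK.
have := congr1 (fun X : M => X i (inord j)) E; rewrite /= NL_entry LNT_entry inordK; last by lia.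
rewrite hj => <-; have hi := ltn_ord i.
case: ltnP => hi'.
  rewrite IH; last by lia.
  rewrite inordK // addSnnS; by [].
by case: leqP => //; lia.
Qed.

Lemma XJ_entry (X : M) (i j : 'I_n.+1) : (X *m J) i j = X i (inord (n - j)).
Proof.
rewrite mxE.
have e (m : 'I_n.+1) : (m + j == n)%N = (n - j == m)%N.
  by have hj := ltn_ord j; apply/eqP/eqP; lia.
under eq_bigr => m _ do rewrite !mxE e mulrC.
by rewrite sum_eqn (_ : (n - j < n.+1)%N) //; lia.
Qed.

Lemma quad_form (X : M) (s : V) :
  (s^T *m X *m tinv s) 0 0 = (hat s *m X *m (invmx (hat s))^T) 0 0.
Proof.
have e : s^T = row 0 (hat s).
  by apply/matrixP => i m; rewrite (ord1 i) [LHS]mxE [RHS]mxE hat_row0.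
rewrite e /tinv tr_row -row_mul -row_mul [LHS]mxE [LHS]mxE [RHS]mxE.
by apply: eq_bigr => m _; rewrite [col _ _ _ _]mxE.
Qed.

Lemma tone_sq : (tone'^T *m tone') 0 0 = 1.
Proof.
rewrite mxE (bigD1 0) //= !mxE eqxx /= mulr1 big1 ?addr0 // => m hm.
by rewrite !mxE (negbTE hm) mul0r.
Qed.

Lemma ball_unit (s : V) : ball tone' 1 s -> hat s \in unitmx.
Proof.
move=> /ballE /(_ 0 0); rewrite !mxE eqxx /= => h.
apply: hat_unit; apply/eqP => e; move: h; rewrite e subr0 normr1 ltxx.
by [].
Qed.

Lemma PJmul (X Y : M) : X *m J = J *m X^T -> Y *m J = J *m Y^T -> X *m Y = Y *m X ->
  (X *m Y) *m J = J *m (X *m Y)^T.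
Proof.
by move=> hX hY eXY; rewrite -mulmxA hY mulmxA hX -mulmxA -trmx_mul eXY.
Qed.

Lemma PJU (s : V) : hat s \in unitmx -> invmx (hat s) *m J = J *m (invmx (hat s))^T.
Proof.
move=> us; set A := hat s.
have h1 : A^T *m (invmx A)^T = 1%:M by rewrite -trmx_mul mulVmx // trmx1.
by rewrite -[LHS]mulmx1 -h1 mulmxA -(mulmxA _ J) -hatJ mulmxA mulVmx // mul1mx.
Qed.


Lemma dir1 (t : V) : hat t 0 ord_max != 0 ->
  normalized_uncurling ((hat t 0 ord_max)^-1 *: (hat t *m exchange R n)).
Proof.
move=> ct; rewrite -/J; set c := hat t 0 ord_max.
have symX (X : M) : X *m J = J *m X^T -> (X *m J)^T = X *m J.
  by move=> hX; rewrite trmx_mul JT hX.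
split; first split.
- by rewrite linearZ /= symX // hatJ.
- exists 1; split => //; split; first by move=> s bs; exact: (@ball_unit s).
  move=> s bs; have us := @ball_unit s bs; apply: closedI => //.
  set U := invmx (hat s).
  have cU : U *m hat t = hat t *m U by apply: comm_inv => //; exact: comm_hat.
  have PU := @PJU s us.
  rewrite -!scalemxAr linearZ /= !mulmxA; congr (_ *: _).
  apply: symX; apply: PJmul; last first.
  + by rewrite -mulmxA cU !mulmxA cU.
  + exact: hatJ.
  + by apply: PJmul.
- apply/nbhs_ballP; exists 1 => //= s bs.
  have us := @ball_unit s bs.
  rewrite quad_form tone_sq.
  rewrite -scalemxAr -scalemxAl mxE -!mulmxA -(@PJU s us) !mulmxA comm_hat.
  rewrite -(mulmxA (hat t)) mulmxV // mulmx1 XJ_entry subn0.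
  rewrite (_ : inord n = ord_max); last by apply/val_inj; rewrite /= inordK.
  by rewrite mulVf.
Qed.

Lemma dir2 (L : M) : normalized_uncurling L ->
  exists t : V, hat t 0 ord_max != 0 /\
    L = (hat t 0 ord_max)^-1 *: (hat t *m exchange R n).
Proof.
case=> [[LT [r [r0 [Hu Hc]]]] Hn]; rewrite -/J.
have L00 : L 0 0 = 1.
  have := nbhs_singleton Hn; rewrite -/tone' quad_form tone_sq hat_tone invmx1.
  by rewrite trmx1 mulmx1 mul1mx.
have NL := @dir2_NL L r LT r0 (fun s bs => conj (Hu s bs) (Hc s bs)).
have HK := @hankel L NL.
pose t : V := \col_(m < n.+1) L (inord (n - m)) 0.
have ct : hat t 0 ord_max = 1.
  rewrite hat_row0 mxE subnn (_ : inord 0 = 0) ?L00 //.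
  by apply/val_inj; rewrite /= inordK.
exists t; rewrite ct invr1 scale1r; split; first exact: oner_neq0.
apply/matrixP => i j; rewrite HK XJ_entry hatij mxE.
have hi := ltn_ord i; have hj := ltn_ord j.
rewrite inordK; last by lia.
case: leqP => h1; case: leqP => h2 //; try lia.
rewrite inordK; last by lia.
by congr (L _ _); apply/val_inj; rewrite /= !inordK; lia.
Qed.

End T.

Theorem corollary10p5 (R : realType) (n : nat) :
  (forall t : 'cV[R]_n.+1, hat t 0 ord_max != 0 ->
     normalized_uncurling ((hat t 0 ord_max)^-1 *: (hat t *m exchange R n))) /\
  (forall L : 'M[R]_n.+1, normalized_uncurling L ->
     exists t : 'cV[R]_n.+1, hat t 0 ord_max != 0 /\
       L = (hat t 0 ord_max)^-1 *: (hat t *m exchange R n)).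
Proof. by split; [exact: dir1 | exact: dir2]. Qed.
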